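(* Assume $C$ satisfies (A1), (A2) and (A3). Then there exist $c>0$ depending only on $N_0,\kappa_2$, and $\Theta_2\ge1$ depending on $\kappa_1,\kappa_2,N_0,d,\alpha$, such that for all $\rho>0$, $\lambda>0$ and all $f\in L^2(\rho^{-1}\mathbb Z^d,\rho^{-d}\mu)$, $$\mathcal E^{\rho,\lambda}_\alpha(f,f)\le c\,\mathcal E^{\rho,\lambda\Theta_2}(f,f),\qquad\text{and in particular}\qquad \mathcal E^{\rho}_\alpha(f,f)\le c\,\mathcal E^{\rho}(f,f).$$
   Context: Fix $d\ge1$, $\alpha\in(0,2)$; $\mu$ counting measure. $C:\mathbb Z^d\times\mathbb Z^d\to[0,\infty)$ with: (A1) $C(x,y)=C(y,x)$, $C(x,x)=0$. (A2) $C(x,y)\le\kappa_1|x-y|^{-d-\alpha}$ for $x\ne y$. (A3) There are $N_0\in\mathbb N,\kappa_2>0$ such that for $x\ne y$ in $\mathbb Z^d$ there are $z_0^{(x,y)}=x,\dots,z_l^{(x,y)}=y$, $l\le N_0$, with $C(z_i^{(x,y)},z_{i+1}^{(x,y)})\ge\kappa_2|x-y|^{-d-\alpha}$; and for every $(\zeta,\xi)$ at most $N_0$ pairs $(x,y)$ have $\zeta=z_k^{(x,y)},\xi=z_{k+1}^{(x,y)}$ for some $k$. For $\rho>0$ set $C^\rho(x,y)=\rho^{d+\alpha}C(\rho x,\rho y)$ on $\rho^{-1}\mathbb Z^d$, and $\mathcal E^{\rho,\lambda}(f,f)=\frac12\sum_{x,y\in\rho^{-1}\mathbb Z^d,|x-y|\le\lambda}(f(x)-f(y))^2C^\rho(x,y)\rho^{-2d}$,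 $\mathcal E^{\rho,\lambda}_\alpha(f,f)=\frac12\sum_{x,y\in\rho^{-1}\mathbb Z^d,|x-y|\le\lambda,x\ne y}(f(x)-f(y))^2|x-y|^{-d-\alpha}\rho^{-2d}$, and $\mathcal E^\rho,\mathcal E^\rho_\alpha$ the same sums without the restriction $|x-y|\le\lambda$. *)

(* Defs.v *)
From HB Require Import structures.
From mathcomp Require Import all_boot all_order all_algebra.
From mathcomp Require Import all_classical all_reals all_analysis.
Set Implicit Arguments. Unset Strict Implicit. Unset Printing Implicit Defensive.
Import Order.TTheory GRing.Theory Num.Theory.
Local Open Scope classical_set_scope.
Local Open Scope ring_scope.

Section Defs.
Variables (R : realType) (d : nat).

Definition latt := 'rV[int]_d.

Definition enorm (v : 'rV[R]_d) : R := Num.sqrt (\sum_(i < d) v ord0 i ^+ 2).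

Definition emb (rho : R) (z : latt) : 'rV[R]_d := rho^-1 *: map_mx (fun k : int => k%:~R) z.

Definition kern (alpha : R) (v : 'rV[R]_d) : R := enorm v `^ (- (d%:R + alpha)).

Definition qform (rho : R) (P : latt -> latt -> Prop) (K : latt -> latt -> R)
  (f : 'rV[R]_d -> R) : \bar R :=
  ((2^-1)%:E * \esum_(p in [set p : latt * latt | p.1 <> p.2 /\ P p.1 p.2])
     ((f (emb rho p.1) - f (emb rho p.2)) ^+ 2 * K p.1 p.2 * rho ^- (2 * d))%:E)%E.

(* C^rho(x,y) = rho^{d+alpha} C(rho x, rho y), with x = z/rho, y = w/rho *)
Definition Crho (alpha rho : R) (C : latt -> latt -> R) (z w : latt) : R :=
  rho `^ (d%:R + alpha) * C z w.

Definition within (rho lam : R) (z w : latt) : Prop :=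
  enorm (emb rho z - emb rho w) <= lam.

Definition E_rl (alpha rho lam : R) (C : latt -> latt -> R) f :=
  qform rho (within rho lam) (Crho alpha rho C) f.
Definition Ea_rl (alpha rho lam : R) f :=
  qform rho (within rho lam) (fun z w => kern alpha (emb rho z - emb rho w)) f.
Definition E_r (alpha rho : R) (C : latt -> latt -> R) f :=
  qform rho (fun _ _ => True) (Crho alpha rho C) f.
Definition Ea_r (alpha rho : R) f :=
  qform rho (fun _ _ => True) (fun z w => kern alpha (emb rho z - emb rho w)) f.

Definition L2 (rho : R) (f : 'rV[R]_d -> R) : Prop :=
  (\esum_(z in [set: latt]) ((f (emb rho z)) ^+ 2 * rho ^- d)%:E < +oo)%E.

Definition znorm (x y : latt) : R := enorm (map_mx (fun k : int => k%:~R) (x - y)).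

Definition A1 (C : latt -> latt -> R) : Prop :=
  (forall x y, 0 <= C x y) /\ (forall x y, C x y = C y x) /\ (forall x, C x x = 0).

Definition A2 (alpha kappa1 : R) (C : latt -> latt -> R) : Prop :=
  forall x y, x <> y -> C x y <= kappa1 * znorm x y `^ (- (d%:R + alpha)).

Definition uses_edge (p : seq latt) (zeta xi : latt) : Prop :=
  exists k, (k.+1 < size p)%N /\ nth zeta p k = zeta /\ nth zeta p k.+1 = xi.

Definition A3 (alpha : R) (N0 : nat) (kappa2 : R) (C : latt -> latt -> R) : Prop :=
  exists path : latt -> latt -> seq latt,
    (forall x y, x <> y ->
       exists l, (l <= N0)%N /\ size (path x y) = l.+1 /\
         nth x (path x y) 0 = x /\ nth x (path x y) l = y /\
         (forall i, (i < l)%N ->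
            kappa2 * znorm x y `^ (- (d%:R + alpha))
              <= C (nth x (path x y) i) (nth x (path x y) i.+1))) /\
    (forall zeta xi (s : seq (latt * latt)),
       uniq s ->
       (forall q, q \in s -> q.1 <> q.2 /\ uses_edge (path q.1 q.2) zeta xi) ->
       (size s <= N0)%N).

End Defs.

(* Main.v *)
Require Import Defs.
From HB Require Import structures.
From mathcomp Require Import all_boot all_order all_algebra.
From mathcomp Require Import all_classical all_reals all_analysis.
Import Order.TTheory GRing.Theory Num.Theory.
Local Open Scope classical_set_scope.
Local Open Scope ring_scope.
From mathcomp Require Import ring lra.
Lemma esum_fiber (R : realType) (T : choiceType) (F : set T) (c : R) (N : nat) :
  0 <= c -> (forall s : seq T, uniq s -> (forall q, q \in s -> F q) -> (size s <= N)%N) ->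
  (\esum_(p in F) c%:E <= (c *+ N)%:E)%E.
Proof.
move=> c0 HN; apply: ge_ereal_sup => _ [X [finX XF] <-].
rewrite fsbig_finite //= sumEFin lee_fin.
rewrite big_const_seq count_predT iter_addr_0.
apply: ler_wpMn2l => //; apply: HN; first exact: finmap.fset_uniq.
by move=> q; rewrite in_fset_set // inE => /XF.
Qed.
Lemma esumZ_le (R : realType) (T : choiceType) (S : set T) (k : R) (g : T -> R) :
  0 <= k -> (forall e, 0 <= g e) ->
  (\esum_(e in S) (k * g e)%:E <= k%:E * \esum_(e in S) (g e)%:E)%E.
Proof.
move=> k0 g0; apply: ge_ereal_sup => _ [X [finX XS] <-].
rewrite fsbig_finite //= sumEFin -mulr_sumr EFinM lee_wpmul2l ?lee_fin //.
apply: ereal_sup_ubound; exists X => //.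
by rewrite fsbig_finite //= sumEFin.
Qed.

Lemma key (R : realType) (T U : choiceType) (u0 : U) (S : set T) (Tt : set U)
  (h : T -> R) (g : U -> R) (rel : T -> U -> Prop) (k : R) (N : nat) :
  0 <= k -> (forall e, 0 <= g e) ->
  (forall p, S p -> exists e, rel p e /\ Tt e /\ h p <= k * g e) ->
  (forall e (s : seq T), uniq s -> (forall q, q \in s -> S q /\ rel q e) -> (size s <= N)%N) ->
  (\esum_(p in S) (h p)%:E <= (k * N%:R)%:E * \esum_(e in Tt) (g e)%:E)%E.
Proof.
move=> k0 g0 Hh Hf.
have [phi Hphi] : exists phi : T -> U, forall p, S p ->
    rel p (phi p) /\ Tt (phi p) /\ h p <= k * g (phi p).
  have H : forall p, exists e, S p -> rel p e /\ Tt e /\ h p <= k * g e.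
    move=> p; have [Sp|nSp] := pselect (S p).
      by have [e He] := Hh p Sp; exists e.
    by exists u0.
  by have [phi Hphi] := choice H; exists phi.
apply: (@le_trans _ _ (\esum_(p in S) (k * g (phi p))%:E)%E).
  by apply: le_esum => p Sp; rewrite lee_fin; have [_ [_ ->]] := Hphi p Sp.
apply: (le_trans (@esumZ_le R T S k (fun p => g (phi p)) k0 (fun p => g0 _))).
rewrite EFinM -muleA lee_wpmul2l ?lee_fin //.
have -> : (\esum_(p in S) (g (phi p))%:E =
    \esum_(z in S `*`` (fun p => [set phi p])) (g z.2)%:E)%E.
  rewrite -(esum_esum (a := fun p e => (g e)%:E)); last by move=> *; rewrite lee_fin.
  by apply: eq_esum => p Sp; rewrite esum_set1 // lee_fin.
rewrite (reindex_esum (Tt `*`` (fun e => [set p | S p /\ phi p = e]))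
   (S `*`` (fun p => [set phi p])) (fun z => (z.2, z.1))); last first.
  split.
  - by move=> [e p] [/= Te [Sp <-]]; split => //=.
  - by move=> [e p] [e' p'] /= _ _ [-> ->].
  - move=> [p e] [/= Sp ->]; exists (phi p, p) => //=; split => //=.
    by have [_ []] := Hphi p Sp.
rewrite /=.
rewrite (_ : (\esum_(z in Tt `*`` (fun e => [set p | S p /\ phi p = e])) (g z.1)%:E =
   \esum_(e in Tt) \esum_(p in [set p | S p /\ phi p = e]) (g e)%:E)%E); last first.
  by rewrite (esum_esum (a := fun e p => (g e)%:E)) //; move=> *; rewrite lee_fin.
apply: (@le_trans _ _ (\esum_(e in Tt) (N%:R * g e)%:E)%E).
  apply: le_esum => e Te; rewrite mulr_natl; apply: esum_fiber => // s us sS.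
  apply: (Hf e s us) => q /sS [Sq <-]; split => //; by have [] := Hphi q Sq.
exact: (@esumZ_le R U Tt N%:R g (ler0n _ _) g0).
Qed.

Section Geo.
Variables (R : realType) (d : nat).

Lemma emb_diff (rho : R) (z w : latt d) :
  emb rho z - emb rho w = rho^-1 *: map_mx (fun k : int => k%:~R) (z - w).
Proof. by apply/matrixP => i j; rewrite !mxE intrB mulrBr. Qed.

Lemma enormZ (a : R) (v : 'rV[R]_d) : enorm (a *: v) = `|a| * enorm v.
Proof.
rewrite /enorm; under eq_bigr do rewrite mxE exprMn.
by rewrite -mulr_sumr sqrtrM ?sqr_ge0 // sqrtr_sqr.
Qed.

Lemma enorm_ge0 (v : 'rV[R]_d) : 0 <= enorm v.
Proof. exact: sqrtr_ge0. Qed.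

Lemma znorm_gt0 (x y : latt d) : x <> y -> 0 < znorm R x y.
Proof.
move=> nxy; rewrite /znorm /enorm sqrtr_gt0.
have [j Hj] : exists j : 'I_d, (x - y) ord0 j != 0.
  apply: contrapT => H; apply: nxy; apply/eqP; rewrite -subr_eq0; apply/eqP.
  apply/matrixP => i j; rewrite ord1 [RHS]mxE.
  by apply: contrapT => Hn; apply: H; exists j; apply/eqP.
rewrite (bigD1 j) //=.
apply: (@lt_le_trans _ _ ((map_mx (fun k : int => k%:~R : R) (x - y)) ord0 j ^+ 2)).
  by rewrite mxE lt_def sqr_ge0 andbT sqrf_eq0 intr_eq0.
by rewrite lerDl; apply: sumr_ge0 => i _; apply: sqr_ge0.
Qed.

Lemma znorm_ge0 (x y : latt d) : 0 <= znorm R x y.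
Proof. exact: enorm_ge0. Qed.

Lemma enorm_emb (rho : R) (z w : latt d) : 0 < rho ->
  enorm (emb rho z - emb rho w) = rho^-1 * znorm R z w.
Proof. by move=> r0; rewrite emb_diff enormZ gtr0_norm ?invr_gt0. Qed.

Lemma kern_emb (alpha rho : R) (z w : latt d) : 0 < rho ->
  kern alpha (emb rho z - emb rho w) =
  rho `^ (d%:R + alpha) * znorm R z w `^ (- (d%:R + alpha)).
Proof.
move=> r0; rewrite /kern enorm_emb // powRM ?znorm_ge0 ?invr_ge0 ?ltW //.
congr (_ * _).
have -> : rho^-1 = rho `^ (-1) by rewrite powRN powRr1 // ltW.
by rewrite -powRrM mulNr mul1r opprK.
Qed.

End Geo.

Lemma pigeon (R : realType) (u : nat -> R) (l : nat) : (0 < l)%N ->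
  exists i, (i < l)%N /\ `|u l - u 0%N| <= l%:R * `|u i.+1 - u i|.
Proof.
move=> l0; apply: contrapT => H.
have H' : forall i, (i < l)%N -> l%:R * `|u i.+1 - u i| < `|u l - u 0%N|.
  move=> i il; rewrite ltNge; apply/negP => Hle; apply: H; by exists i.
have Hs : `|u l - u 0%N| <= \sum_(0 <= k < l) `|u k.+1 - u k|.
  by rewrite -(telescope_sumr _ (leq0n l)) ler_norm_sum.
have : l%:R * `|u l - u 0%N| < l%:R * `|u l - u 0%N|.
  apply: (le_lt_trans (ler_wpM2l (ler0n _ _) Hs)).
  rewrite mulr_sumr.
  apply: (@lt_le_trans _ _ (\sum_(0 <= k < l) `|u l - u 0%N|)).
    by apply: ltr_sum_nat => // i /andP[_ il]; apply: H'.
  by rewrite sumr_const_nat subn0 mulr_natl.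
by rewrite ltxx.
Qed.

Lemma compare (R : realType) (d N0 : nat) (kappa2 alpha rho : R)
  (C : latt d -> latt d -> R) (P Q : latt d -> latt d -> Prop) (f : 'rV[R]_d -> R) :
  0 < kappa2 -> 0 < rho -> A1 C -> A3 alpha N0 kappa2 C ->
  (forall x y z w, x <> y -> P x y -> z <> w ->
     kappa2 * znorm R x y `^ (- (d%:R + alpha)) <= C z w -> Q z w) ->
  (qform rho P (fun z w => kern alpha (emb rho z - emb rho w)) f <=
     ((N0.+1%:R ^+ 2 / kappa2) * N0.+1%:R)%:E * qform rho Q (Crho alpha rho C) f)%E.
Proof.
move=> k2 r0 [C0 [Csym Cdiag]] [path [Hpath Hfib]] HPQ.
rewrite /qform muleCA; apply: lee_wpmul2l; first by rewrite lee_fin invr_ge0.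
apply: (@key R _ _ ((0 : latt d), (0 : latt d)) _ _
  (fun p => (f (emb rho p.1) - f (emb rho p.2)) ^+ 2 *
            kern alpha (emb rho p.1 - emb rho p.2) * rho ^- (2 * d))
  (fun p => (f (emb rho p.1) - f (emb rho p.2)) ^+ 2 *
            Crho alpha rho C p.1 p.2 * rho ^- (2 * d))
  (fun q e => uses_edge (path q.1 q.2) e.1 e.2)).
- by apply: divr_ge0 => //; apply: ltW.
- move=> e; rewrite /Crho; apply: mulr_ge0; last by rewrite invr_ge0 exprn_ge0 // ltW.
  by apply: mulr_ge0; [apply: sqr_ge0 | apply: mulr_ge0; [apply: powR_ge0 | apply: C0]].
- move=> [x y] /= [nxy Pxy].
  have [l [lN [sz [h0 [hl hC]]]]] := Hpath x y nxy.
  have l0 : (0 < l)%N.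
    rewrite lt0n; apply/eqP => l0; subst l; apply: nxy.
    by rewrite hl in h0.
  have [i [il Hi]] := @pigeon R (fun i => f (emb rho (nth x (path x y) i))) l l0.
  move: Hi => /=; rewrite h0 hl => Hi.
  exists (nth x (path x y) i, nth x (path x y) i.+1) => /=.
  split; [|split].
  + exists i; rewrite sz; split => //; split; apply: set_nth_default; rewrite sz //.
    exact: ltnW.
  + have nE : nth x (path x y) i <> nth x (path x y) i.+1.
      move=> E; have := hC i il; rewrite -E Cdiag.
      by rewrite leNgt mulr_gt0 // powR_gt0 // znorm_gt0.
    split; first exact: nE.
    exact: (HPQ _ _ _ _ nxy Pxy nE (hC i il)).
  + set zi := nth x (path x y) i; set zj := nth x (path x y) i.+1.
    have HA : (f (emb rho x) - f (emb rho y)) ^+ 2 <=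
        N0.+1%:R ^+ 2 * (f (emb rho zi) - f (emb rho zj)) ^+ 2.
      rewrite -[X in X <= _]real_normK ?num_real // (distrC (f (emb rho x))).
      rewrite -[X in _ <= _ * X]real_normK ?num_real // (distrC (f (emb rho zi))).
      rewrite -exprMn ler_pXn2r // ?nnegrE ?mulr_ge0 //.
      apply: (le_trans Hi); apply: ler_wpM2r => //; rewrite ler_nat; exact: leqW.
    have HB : znorm R x y `^ (- (d%:R + alpha)) <= C zi zj / kappa2.
      by rewrite ler_pdivlMr // mulrC; exact: hC i il.
    rewrite kern_emb // /Crho.
    apply: (@le_trans _ _ ((N0.+1%:R ^+ 2 * (f (emb rho zi) - f (emb rho zj)) ^+ 2) *
        (rho `^ (d%:R + alpha) * (C zi zj / kappa2)) / rho ^+ (2 * d))).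
      apply: ler_wpM2r; first by rewrite invr_ge0 exprn_ge0 // ltW.
      apply: ler_pM => //; first exact: sqr_ge0.
        by apply: mulr_ge0; apply: powR_ge0.
      by apply: ler_wpM2l => //; apply: powR_ge0.
    rewrite le_eqVlt; apply/orP; left; apply/eqP; field.
    by apply/andP; split; [rewrite expf_neq0 // gt_eqF | rewrite gt_eqF].
- move=> e s us Hs; apply: leqW; apply: (Hfib e.1 e.2 s us) => q /Hs [[Sq _] Hr].
  by split.
Qed.

Lemma within_step (R : realType) (d : nat) (alpha kappa1 kappa2 rho lam : R)
  (C : latt d -> latt d -> R) (x y z w : latt d) :
  0 < kappa2 -> 0 < kappa1 -> 0 < d%:R + alpha -> 0 < rho ->
  A2 alpha kappa1 C -> x <> y -> Defs.within rho lam x y -> z <> w ->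
  kappa2 * znorm R x y `^ (- (d%:R + alpha)) <= C z w ->
  Defs.within rho (lam * Num.max 1 ((kappa1 / kappa2) `^ ((d%:R + alpha)^-1))) z w.
Proof.
move=> k2 k1 s0 r0 HA2 nxy Hxy nzw HC.
move: Hxy; rewrite /Defs.within !enorm_emb // => Hxy.
set s := d%:R + alpha in s0 HC HA2 *.
set T := (kappa1 / kappa2) `^ s^-1.
have T0 : 0 < T by rewrite powR_gt0 // divr_gt0.
have Zxy := @znorm_gt0 R d x y nxy; have Zzw := @znorm_gt0 R d z w nzw.
have HT : znorm R z w <= T * znorm R x y.
  rewrite leNgt; apply/negP => Hlt.
  have H1 : znorm R z w `^ (- s) < (T * znorm R x y) `^ (- s).
    rewrite !powRN ltf_pV2 ?posrE ?powR_gt0 ?mulr_gt0 //.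
    by apply: gt0_ltr_powR => //; rewrite nnegrE ltW // mulr_gt0.
  rewrite powRM ?ltW // in H1.
  have ET : T `^ (- s) = kappa2 / kappa1.
    rewrite /T -powRrM mulrN mulVf ?gt_eqF // powRN powRr1 ?invf_div //.
    by rewrite ltW // divr_gt0.
  rewrite ET in H1.
  have := HA2 z w nzw.
  have : kappa1 * znorm R z w `^ (- s) < kappa2 * znorm R x y `^ (- s).
    rewrite -(ltr_pM2l k1) in H1; apply: (lt_le_trans H1).
    by rewrite mulrA mulrCA divff ?gt_eqF // mulr1.
  move=> H2 H3.
  have := lt_le_trans H2 (le_trans HC H3).
  by rewrite ltxx.
apply: (le_trans (ler_wpM2l _ HT)); first by rewrite invr_ge0 ltW.
rewrite mulrCA mulrC.
apply: ler_pM => //; first by rewrite mulr_ge0 // ?invr_ge0 ltW.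
  exact: ltW.
by rewrite le_max lexx orbT.
Qed.

Theorem lemma3p1 (R : realType) (N0 : nat) (kappa2 : R) (hk2 : 0 < kappa2) :
  exists c : R, 0 < c /\
  forall (d : nat) (alpha kappa1 : R), (1 <= d)%N -> 0 < alpha -> alpha < 2 ->
    0 < kappa1 ->
  exists Theta2 : R, 1 <= Theta2 /\
  forall C : latt d -> latt d -> R,
    A1 C -> A2 alpha kappa1 C -> A3 alpha N0 kappa2 C ->
    forall (rho lam : R) (f : 'rV[R]_d -> R), 0 < rho -> 0 < lam -> L2 rho f ->
      (Ea_rl alpha rho lam f <= c%:E * E_rl alpha rho (lam * Theta2) C f)%E /\
      (Ea_r alpha rho f <= c%:E * E_r alpha rho C f)%E.
Proof.
exists ((N0.+1%:R ^+ 2 / kappa2) * N0.+1%:R); split.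
  by rewrite mulr_gt0 // divr_gt0 // exprn_gt0.
move=> d alpha kappa1 d1 a0 a2 k1.
exists (Num.max 1 ((kappa1 / kappa2) `^ ((d%:R + alpha)^-1))); split.
  by rewrite le_max lexx.
move=> C HA1 HA2 HA3 rho lam f r0 l0 _.
have s0 : 0 < d%:R + alpha by rewrite addr_gt0 // ltr0n.
split.
  apply: compare => // x y z w nxy Pxy nzw HC.
  exact: (@within_step R d alpha kappa1 kappa2 rho lam C x y z w hk2 k1 s0 r0 HA2 nxy Pxy nzw HC).
by apply: compare.
Qed.
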